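(* Let $\alpha,\beta$ be relatively prime positive integers. For all positive integers $n$ with $s(n)>2$, $$\tfrac12\log_\gamma(n)-1\le s(n)\le\log_\gamma(n)+2.$$ Moreover, for $\alpha=\beta=1$ and all $n$ with $s^{1,1}(n)>2$, we have $s^{1,1}(n)\ge\frac12\log_\varphi(n)+2$, where $\varphi=\frac{1+\sqrt5}{2}$ is the golden ratio.
   Context: For relatively prime positive integers $\alpha,\beta$ and positive integers $a_1,a_2$, the $(\alpha,\beta)$-walk $w_k(a_1,a_2)$ is given by $w_1=a_1$, $w_2=a_2$, $w_{k+2}=\alpha w_{k+1}+\beta w_k$ ($k\ge1$). For a positive integer $n$, $s(n;a_1,a_2)$ is the (largest) index $s$ with $w_s(a_1,a_2)=n$ ($-\infty$ if none), and $s(n)=s^{\alpha,\beta}(n)=\max_{a_1,a_2\ge1}s(n;a_1,a_2)$. $\gamma=\frac12(\alpha+\sqrt{\alpha^2+4\beta})$. *)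

(* Defs.v *)
From Stdlib Require Import Reals Arith.
Open Scope R_scope.

(* walk_pair a b k = (w_{k+1}, w_{k+2}) for the (alpha,beta)-walk with
   w_1 = a, w_2 = b, w_{k+2} = alpha w_{k+1} + beta w_k. *)
Fixpoint walk_pair (alpha beta a1 a2 : nat) (k : nat) : nat * nat :=
  match k with
  | O => (a1, a2)
  | S k' => let (x, y) := walk_pair alpha beta a1 a2 k' in
            (y, (alpha * y + beta * x)%nat)
  end.

(* walk alpha beta a1 a2 k = w_k(a1,a2), for indices k >= 1 (1-based). *)
Definition walk (alpha beta a1 a2 k : nat) : nat :=
  fst (walk_pair alpha beta a1 a2 (k - 1)).

Definition is_s (alpha beta n s : nat) : Prop :=
  (1 <= s)%nat /\
  (exists a1 a2, (1 <= a1)%nat /\ (1 <= a2)%nat /\ walk alpha beta a1 a2 s = n) /\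
  (forall a1 a2 k, (1 <= a1)%nat -> (1 <= a2)%nat -> (1 <= k)%nat ->
     walk alpha beta a1 a2 k = n -> (k <= s)%nat).

Definition gamma (alpha beta : nat) : R :=
  (INR alpha + sqrt (INR alpha ^ 2 + 4 * INR beta)) / 2.

Definition logb (b x : R) : R := ln x / ln b.

Definition phi : R := (1 + sqrt 5) / 2.

(* Main.v *)
Require Import Defs.
From Stdlib Require Import Reals Arith Lia Lra Psatz.
Open Scope R_scope.

Fixpoint G (a b : nat) (k : nat) : nat :=
  match k with
  | O => 0%nat
  | S k1 => match k1 with
            | O => 1%nat
            | S k2 => (a * G a b k1 + b * G a b k2)%nat
            end
  end.

Fixpoint U (a b : nat) (k : nat) : nat :=
  match k with
  | O => 1%nat
  | S k1 => match k1 with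
            | O => 0%nat
            | S k2 => (a * U a b k1 + b * U a b k2)%nat
            end
  end.

Lemma GSS a b k : G a b (S (S k)) = (a * G a b (S k) + b * G a b k)%nat.
Proof. reflexivity. Qed.
Lemma USS a b k : U a b (S (S k)) = (a * U a b (S k) + b * U a b k)%nat.
Proof. reflexivity. Qed.

Lemma walk_pair_eq al be a1 a2 j :
  walk_pair al be a1 a2 j =
  (U al be j * a1 + G al be j * a2, U al be (S j) * a1 + G al be (S j) * a2)%nat.
Proof.
  induction j as [|j IH].
  - simpl. f_equal; lia.
  - simpl walk_pair. rewrite IH. rewrite USS, GSS. f_equal. nia.
Qed.

Lemma U_G al be j : U al be (S j) = (be * G al be j)%nat.
Proof.
  assert (H : forall j, U al be (S j) = (be * G al be j)%nat /\
                        U al be (S (S j)) = (be * G al be (S j))%nat).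
  { induction j0 as [|j0 [IH1 IH2]].
    - simpl. split; lia.
    - split; [exact IH2|]. rewrite USS, GSS, IH1, IH2. nia. }
  apply H.
Qed.

Lemma walk_S al be a1 a2 j :
  walk al be a1 a2 (S (S j)) = (be * G al be j * a1 + G al be (S j) * a2)%nat.
Proof.
  unfold walk. replace (S (S j) - 1)%nat with (S j) by lia.
  rewrite walk_pair_eq. cbn [fst]. rewrite U_G. lia.
Qed.

Lemma G_pos al be i : (1 <= al)%nat -> (1 <= i)%nat -> (1 <= G al be i)%nat.
Proof.
  intros Ha Hi.
  assert (H : forall i, (1 <= G al be (S i))%nat /\ (1 <= G al be (S (S i)))%nat).
  { induction i0 as [|i0 [IH1 IH2]].
    - simpl. split; lia.
    - split; [exact IH2|]. rewrite GSS. nia. }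
  destruct i; [lia|]. apply H.
Qed.

Lemma coprime_mul a b c : Nat.gcd a c = 1%nat -> Nat.gcd b c = 1%nat ->
  Nat.gcd (a * b) c = 1%nat.
Proof.
  intros Hac Hbc.
  set (d := Nat.gcd (a * b) c).
  assert (Hd1 : Nat.divide d (a * b)) by apply Nat.gcd_divide_l.
  assert (Hd2 : Nat.divide d c) by apply Nat.gcd_divide_r.
  assert (Hda : Nat.gcd d a = 1%nat).
  { apply Nat.divide_1_r. rewrite <- Hac.
    apply Nat.gcd_greatest.
    - apply Nat.gcd_divide_r.
    - eapply Nat.divide_trans; [apply Nat.gcd_divide_l|exact Hd2]. }
  assert (Hdb : Nat.divide d b) by (eapply Nat.gauss; eauto).
  apply Nat.divide_1_r. rewrite <- Hbc. apply Nat.gcd_greatest; auto.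
Qed.

Lemma G_coprime al be : Nat.gcd al be = 1%nat -> forall i,
  Nat.gcd (G al be i) (G al be (S i)) = 1%nat /\ Nat.gcd be (G al be (S i)) = 1%nat.
Proof.
  intros Hab. induction i as [|i [IH1 IH2]].
  - simpl. split; [reflexivity|]. rewrite Nat.gcd_comm; reflexivity.
  - split.
    + rewrite GSS.
      replace (al * G al be (S i) + be * G al be i)%nat
        with (be * G al be i + al * G al be (S i))%nat by lia.
      rewrite Nat.gcd_add_mult_diag_r, Nat.gcd_comm.
      apply coprime_mul; auto.
    + rewrite GSS.
      replace (al * G al be (S i) + be * G al be i)%nat
        with (al * G al be (S i) + G al be i * be)%nat by lia.
      rewrite Nat.gcd_add_mult_diag_r, Nat.gcd_comm.
      apply coprime_mul; auto.
      rewrite Nat.gcd_comm; auto.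
Qed.

Lemma frob (a b n : nat) : (1 <= a)%nat -> (1 <= b)%nat -> Nat.gcd a b = 1%nat ->
  (a * b < n)%nat -> exists x y, (1 <= x)%nat /\ (1 <= y)%nat /\ (x * a + y * b = n)%nat.
Proof.
  intros Ha Hb Hg Hn.
  destruct (Nat.gcd_bezout_pos a b ltac:(lia)) as [u [v Huv]].
  rewrite Hg in Huv.
  set (t := (n * u + (b - 1))%nat).
  pose proof (Nat.div_mod t b ltac:(lia)) as Hdm.
  pose proof (Nat.mod_upper_bound t b ltac:(lia)) as Hr.
  set (q := (t / b)%nat) in *. set (r := (t mod b)%nat) in *.
  assert (Ht : (r + 1 + b * q = n * u + b)%nat) by (unfold t in Hdm; lia).
  assert (H : ((r + 1) * a + b * q * a = n + n * v * b + a * b)%nat).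
  { assert (E : ((r + 1 + b * q) * a = (n * u + b) * a)%nat) by (rewrite Ht; reflexivity).
    assert (E2 : (n * u * a = n * (1 + v * b))%nat) by (rewrite <- Huv; ring).
    nia. }
  assert (Hx : ((r + 1) * a < n)%nat) by nia.
  assert (Hq : (n * v + a < q * a)%nat).
  { destruct (Nat.lt_ge_cases (n * v + a) (q * a)) as [|Hc]; [assumption|].
    exfalso. assert (b * (q * a) <= b * (n * v + a))%nat by (apply Nat.mul_le_mono_l; exact Hc).
    nia. }
  exists (r + 1)%nat, (q * a - (n * v + a))%nat.
  split; [lia|]. split; [lia|].
  destruct (Nat.le_exists_sub (n * v + a) (q * a) ltac:(lia)) as [d [Hd _]].
  rewrite Hd. replace (d + (n * v + a) - (n * v + a))%nat with d by lia.
  assert (E3 : (b * q * a = b * (q * a))%nat) by ring.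
  rewrite E3, Hd in H. nia.
Qed.

Lemma key al be n s i : (1 <= al)%nat -> (1 <= be)%nat -> Nat.gcd al be = 1%nat ->
  is_s al be n s -> (1 <= i)%nat -> (be * G al be i * G al be (S i) < n)%nat ->
  (S (S i) <= s)%nat.
Proof.
  intros Ha Hb Hg [_ [_ Hmax]] Hi Hn.
  pose proof (G_pos al be i Ha Hi). pose proof (G_pos al be (S i) Ha ltac:(lia)).
  destruct (G_coprime al be Hg i) as [H1 H2].
  destruct (frob (be * G al be i) (G al be (S i)) n ltac:(nia) ltac:(lia)
     ltac:(apply coprime_mul; auto) ltac:(lia)) as [x [y [Hx [Hy Hxy]]]].
  apply (Hmax x y); try lia.
  rewrite walk_S. lia.
Qed.

Lemma ln_le' x y : 0 < x -> x <= y -> ln x <= ln y.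
Proof. intros Hx Hxy. destruct (Rle_lt_or_eq_dec _ _ Hxy) as [H|H].
  - left. apply ln_increasing; auto.
  - rewrite H; lra. Qed.

Lemma div_le_c x L c : 0 < L -> x <= c * L -> x / L <= c.
Proof. intros HL H. apply Rmult_le_reg_r with L; [lra|]. unfold Rdiv.
  rewrite Rmult_assoc, Rinv_l; lra. Qed.

Lemma c_le_div x L c : 0 < L -> c * L <= x -> c <= x / L.
Proof. intros HL H. apply Rmult_le_reg_r with L; [lra|]. unfold Rdiv.
  rewrite Rmult_assoc, Rinv_l; lra. Qed.

Lemma gamma_facts al be : (1 <= al)%nat -> (1 <= be)%nat ->
  let g := gamma al be in 1 < g /\ g * g = INR al * g + INR be.
Proof.
  intros Ha Hb g.
  assert (A : 1 <= INR al) by (apply (le_INR 1); lia).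
  assert (B : 1 <= INR be) by (apply (le_INR 1); lia).
  set (S := sqrt (INR al ^ 2 + 4 * INR be)).
  assert (HS : S * S = INR al ^ 2 + 4 * INR be) by (apply sqrt_sqrt; nra).
  assert (HS0 : 0 <= S) by apply sqrt_pos.
  assert (g = (INR al + S) / 2) by reflexivity.
  split; nra.
Qed.

Lemma G_bound al be : (1 <= al)%nat -> (1 <= be)%nat -> forall k,
  INR (G al be (S k)) <= gamma al be ^ k.
Proof.
  intros Ha Hb. destruct (gamma_facts al be Ha Hb) as [g1 g2].
  set (g := gamma al be) in *.
  assert (Hbe0 : 0 <= INR be) by apply pos_INR.
  assert (H : forall k, INR (G al be (S k)) <= g ^ k /\ INR (G al be (S (S k))) <= g ^ S k).
  { induction k as [|k [IH1 IH2]].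
    - rewrite GSS. simpl G. replace (al * 1 + be * 0)%nat with al by lia. simpl. split; [lra|]. nra.
    - split; [exact IH2|]. rewrite GSS, plus_INR, !mult_INR.
      assert (E : g ^ S (S k) = INR al * g ^ S k + INR be * g ^ k) by (simpl; nra).
      rewrite E. assert (0 <= INR al) by apply pos_INR. assert (0 <= INR be) by apply pos_INR.
      nra. }
  intro k. apply H.
Qed.

Lemma H_bound al be : (1 <= al)%nat -> (1 <= be)%nat -> forall k,
  gamma al be ^ k <= gamma al be * INR (U al be k + G al be k).
Proof.
  intros Ha Hb. destruct (gamma_facts al be Ha Hb) as [g1 g2].
  set (g := gamma al be) in *.
  assert (H : forall k, g ^ k <= g * INR (U al be k + G al be k) /\
                        g ^ S k <= g * INR (U al be (S k) + G al be (S k))).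
  { induction k as [|k [IH1 IH2]].
    - simpl. split; lra.
    - split; [exact IH2|]. rewrite GSS, USS.
      replace (al * U al be (S k) + be * U al be k + (al * G al be (S k) + be * G al be k))%nat
        with (al * (U al be (S k) + G al be (S k)) + be * (U al be k + G al be k))%nat by ring.
      rewrite plus_INR, !mult_INR.
      assert (E : g ^ S (S k) = INR al * g ^ S k + INR be * g ^ k) by (simpl; nra).
      rewrite E. assert (0 <= INR al) by apply pos_INR. assert (0 <= INR be) by apply pos_INR.
      nra. }
  intro k. apply H.
Qed.

Lemma gamma11 : gamma 1 1 = phi.
Proof. unfold gamma, phi. simpl INR. f_equal. f_equal. f_equal. ring. Qed.

Lemma neg1_pow k : (-1) ^ k = 1 \/ (-1) ^ k = -1.
Proof. induction k as [|k [H|H]]; simpl; [left; lra| right; rewrite H; lra | left; rewrite H; lra]. Qed.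

Lemma fib_bound i : (1 <= i)%nat ->
  INR (G 1 1 (S i) * G 1 1 (S (S i))) <= phi ^ (2 * i).
Proof.
  intro Hi.
  destruct (gamma_facts 1 1 ltac:(lia) ltac:(lia)) as [p1 p2].
  rewrite gamma11 in p1, p2. simpl INR in p2.
  set (p := phi) in *.
  assert (p3 : p < 2).
  { unfold p, phi. assert (H5 : sqrt 5 * sqrt 5 = 5) by (apply sqrt_sqrt; lra).
    pose proof (sqrt_pos 5). nra. }
  set (q := 1 - p).
  assert (q2 : q * q = q + 1) by (unfold q; nra).
  assert (Bin : forall k, (p - q) * INR (G 1 1 k) = p ^ k - q ^ k /\
                          (p - q) * INR (G 1 1 (S k)) = p ^ S k - q ^ S k).
  { induction k as [|k [IH1 IH2]].
    - simpl. split; ring.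
    - split; [exact IH2|]. rewrite GSS, plus_INR, !mult_INR. change (INR 1) with 1.
      replace (p ^ S (S k)) with (p * p * p ^ k) by (simpl; ring).
      replace (q ^ S (S k)) with (q * q * q ^ k) by (simpl; ring).
      rewrite p2, q2. simpl pow in IH2 |- *. nra. }
  destruct (Bin (S i)) as [HA HB].
  set (A := INR (G 1 1 (S i))) in *. set (B := INR (G 1 1 (S (S i)))) in *.
  set (W := p ^ i).
  assert (HX : p ^ S i = p * W) by reflexivity.
  assert (HX2 : p ^ S (S i) = p * (p * W)) by reflexivity.
  set (Y := q ^ S i) in *.
  assert (HY2 : q ^ S (S i) = q * Y) by reflexivity.
  rewrite HX in HA. rewrite HX2, HY2 in HB.
  assert (HXY : (p * W) * Y = (-1) ^ S i).
  { rewrite <- HX. unfold Y. rewrite <- Rpow_mult_distr. f_equal. unfold q. nra. }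
  assert (HXYb : -1 <= (p * W) * Y <= 1) by (destruct (neg1_pow (S i)) as [E|E]; rewrite HXY, E; lra).
  assert (HqY : q * Y * Y <= 0) by (unfold q; nra).
  assert (HW : p <= W) by (unfold W; replace p with (p ^ 1) at 1 by ring; apply Rle_pow; [lra|lia]).
  assert (H5 : (p - q) * (p - q) = 5) by (unfold q; nra).
  assert (E5 : 5 * (A * B) = (p * W - Y) * (p * (p * W) - q * Y)).
  { rewrite <- HA, <- HB, <- H5. ring. }
  assert (E6 : (p * W - Y) * (p * (p * W) - q * Y) =
               p * (p * p) * (W * W) - (p + q) * ((p * W) * Y) + q * Y * Y) by ring.
  assert (E7 : p * (p * p) = 2 * p + 1) by nra.
  assert (HWW : p + 1 <= W * W) by nra.
  assert (p + q = 1) by (unfold q; ring).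
  replace (2 * i)%nat with (i + i)%nat by lia. rewrite pow_add. fold W.
  rewrite mult_INR. fold A B.
  nra.
Qed.

Lemma upper_n al be n s i : (1 <= al)%nat -> (1 <= be)%nat -> Nat.gcd al be = 1%nat ->
  is_s al be n s -> s = S (S i) -> (1 <= i)%nat ->
  (n <= be * G al be (S i) * G al be (S (S i)))%nat.
Proof.
  intros Ha Hb Hg Hs Es Hi.
  destruct (Nat.le_gt_cases n (be * G al be (S i) * G al be (S (S i)))) as [|Hc]; [assumption|].
  pose proof (key al be n s (S i) Ha Hb Hg Hs ltac:(lia) Hc). lia.
Qed.

Theorem proposition3p4 :
  (forall (alpha beta n s : nat),
     (1 <= alpha)%nat -> (1 <= beta)%nat -> Nat.gcd alpha beta = 1%nat ->
     (1 <= n)%nat -> is_s alpha beta n s -> (2 < s)%nat ->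
     / 2 * logb (gamma alpha beta) (INR n) - 1 <= INR s /\
     INR s <= logb (gamma alpha beta) (INR n) + 2)
  /\
  (forall (n s : nat),
     (1 <= n)%nat -> is_s 1 1 n s -> (2 < s)%nat ->
     / 2 * logb phi (INR n) + 2 <= INR s).
Proof.
  split.
  - intros al be n s Ha Hb Hg Hn Hs Hs2.
    destruct (gamma_facts al be Ha Hb) as [g1 g2].
    set (g := gamma al be) in *.
    assert (L0 : 0 < ln g) by (rewrite <- ln_1; apply ln_increasing; lra).
    assert (Hn0 : 0 < INR n) by (apply lt_0_INR; lia).
    assert (Hbe0 : 0 <= INR be) by apply pos_INR.
    assert (Hal0 : 0 <= INR al) by apply pos_INR.
    destruct s as [|[|i]]; [lia|lia|].
    unfold logb. split.
    + pose proof (upper_n al be n _ i Ha Hb Hg Hs eq_refl ltac:(lia)) as Hup.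
      apply le_INR in Hup. rewrite !mult_INR in Hup.
      pose proof (G_bound al be Ha Hb i) as B1.
      pose proof (G_bound al be Ha Hb (S i)) as B2.
      assert (P1 : 0 <= INR (G al be (S i))) by apply pos_INR.
      assert (P2 : 0 <= INR (G al be (S (S i)))) by apply pos_INR.
      assert (Pw : 0 <= g ^ i) by (apply pow_le; lra).
      assert (Bg : INR be <= g * g) by nra.
      assert (Hn1 : INR n <= g ^ (2 * i + 3)).
      { assert (Ep : g ^ (2 * i + 3) = (g * g) * g ^ i * (g * g ^ i)).
        { replace (2 * i + 3)%nat with (S (S (S (i + i)))) by lia.
          simpl pow. rewrite pow_add. ring. }
        rewrite Ep. simpl pow in B2.
        apply Rle_trans with (INR be * INR (G al be (S i)) * INR (G al be (S (S i)))); [exact Hup|].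
        apply Rmult_le_compat.
        - apply Rmult_le_pos; assumption.
        - assumption.
        - apply Rmult_le_compat; assumption.
        - exact B2. }
      apply ln_le' in Hn1; [|exact Hn0].
      rewrite ln_pow in Hn1 by lra.
      assert (E : INR (2 * i + 3) = 2 * INR i + 3) by (rewrite plus_INR, mult_INR; simpl; ring).
      rewrite E in Hn1.
      assert (ln (INR n) / ln g <= 2 * INR i + 3) by (apply div_le_c; lra).
      rewrite !S_INR. lra.
    + destruct Hs as [_ [[a1 [a2 [H1 [H2 Hw]]]] _]].
      unfold walk in Hw. replace (S (S i) - 1)%nat with (S i) in Hw by lia.
      rewrite walk_pair_eq in Hw. cbn [fst] in Hw.
      assert (Hle : (U al be (S i) + G al be (S i) <= n)%nat).
      { assert (U al be (S i) * 1 <= U al be (S i) * a1)%nat by (apply Nat.mul_le_mono_l; lia).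
        assert (G al be (S i) * 1 <= G al be (S i) * a2)%nat by (apply Nat.mul_le_mono_l; lia).
        lia. }
      apply le_INR in Hle.
      pose proof (H_bound al be Ha Hb (S i)) as HB.
      assert (Hgn : g ^ S i <= g * INR n) by (eapply Rle_trans; [exact HB|]; apply Rmult_le_compat_l; lra).
      apply ln_le' in Hgn; [|apply pow_lt; lra].
      rewrite ln_pow, ln_mult in Hgn by lra.
      rewrite S_INR in Hgn.
      assert (INR i <= ln (INR n) / ln g) by (apply c_le_div; nra).
      rewrite !S_INR. lra.
  - intros n s Hn Hs Hs2.
    assert (Hn0 : 0 < INR n) by (apply lt_0_INR; lia).
    destruct (gamma_facts 1 1 ltac:(lia) ltac:(lia)) as [p1 _].
    rewrite gamma11 in p1.
    assert (L0 : 0 < ln phi) by (rewrite <- ln_1; apply ln_increasing; lra).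
    destruct s as [|[|i]]; [lia|lia|].
    pose proof (upper_n 1 1 n _ i ltac:(lia) ltac:(lia) eq_refl Hs eq_refl ltac:(lia)) as Hup.
    rewrite Nat.mul_1_l in Hup. apply le_INR in Hup.
    pose proof (fib_bound i ltac:(lia)) as Hf.
    assert (Hn1 : INR n <= phi ^ (2 * i)) by lra.
    apply ln_le' in Hn1; [|exact Hn0].
    rewrite ln_pow in Hn1 by lra.
    assert (E : INR (2 * i) = 2 * INR i) by (rewrite mult_INR; simpl; ring).
    rewrite E in Hn1.
    assert (ln (INR n) / ln phi <= 2 * INR i) by (apply div_le_c; lra).
    unfold logb. rewrite !S_INR. lra.
Qed.
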